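(* Let $R$ be a commutative ring and $S$ a finite multiplicative subset of $R$. The following are equivalent: (1) $R$ is a $u$-$S$-coherent ring; (2) $R$ is an $S$-coherent ring; (3) $R$ is a $c$-$S$-coherent ring.
   Context: A multiplicative subset $S$ contains $1$ and is closed under products. $M$ is $S$-finite if there are $s\in S$ and a finitely generated submodule $F\subseteq M$ with $sM\subseteq F$ (with respect to $s$). $M$ is $u$-$S$-finitely presented with respect to $s$ if there is an exact sequence $0\to T_1\to F\to M\to T_2\to 0$ with $F$ finitely presented and $sT_1=sT_2=0$. $R$ is $u$-$S$-coherent if there is $s\in S$ such that $R$ is $S$-finite with respect to $s$ and every finitely generated ideal is $u$-$S$-finitely presented with respect to $s$. $M$ is $S$-finitely presented if there is an exact sequence $0\to K\to F\to M\to 0$ with $F$ finitely generated free and $K$ $S$-finite; $M$ is $c$-$S$-finitely presented if there are $s\in S$ and a finitely presented submodule $N\subseteq M$ with $sM\subseteq N$. $R$ is $S$-coherent (resp. $c$-$S$-coherent) if every finitely generated ideal of $R$ is $S$-finitely presented (resp. $c$-$S$-finitely presented). *)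

(* Defs.v *)
From HB Require Import structures.
From mathcomp Require Import all_boot all_order all_algebra.
Set Implicit Arguments. Unset Strict Implicit. Unset Printing Implicit Defensive.
Import GRing.Theory.
Local Open Scope ring_scope.

(* Modules over a commutative ring R are MathComp's [lmodType R]; the ring R
   itself as a module is the regular module [R^o]; the finitely generated
   free module R^n is ['rV[R]_n]. *)

Section Defs.
Variable R : comPzRingType.

Definition surj (A B : Type) (f : A -> B) : Prop := forall y, exists x, f x = y.

Definition in_span (M : lmodType R) (g : seq M) (x : M) : Prop :=
  exists c : 'I_(size g) -> R, x = \sum_(i < size g) c i *: g`_i.

Definition is_submod (M : lmodType R) (N : M -> Prop) : Prop :=
  N 0 /\ forall (a : R) (u v : M), N u -> N v -> N (a *: u + v).

Definition fg_sub (M : lmodType R) (N : M -> Prop) : Prop :=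
  exists g : seq M, forall x, N x <-> in_span g x.

Definition fin_gen (M : lmodType R) : Prop := fg_sub (fun _ : M => True).

Definition fin_pres (M : lmodType R) : Prop :=
  exists (n : nat) (f : {linear 'rV[R]_n -> M}),
    surj f /\ fg_sub (fun x => f x = 0).

Definition S_finite_sub_wrt (M : lmodType R) (N : M -> Prop) (s : R) : Prop :=
  exists F : M -> Prop, is_submod F /\ fg_sub F /\ (forall x, F x -> N x) /\
    (forall x, N x -> F (s *: x)).

Definition S_finite_wrt (M : lmodType R) (s : R) : Prop :=
  S_finite_sub_wrt (fun _ : M => True) s.

Definition multiplicative (S : R -> Prop) : Prop :=
  S 1 /\ forall a b, S a -> S b -> S (a * b).

Definition finite_subset (S : R -> Prop) : Prop :=
  exists l : seq R, forall x, S x -> x \in l.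

(* u-S-finitely presented with respect to s:
   exact 0 -> T1 -> F -> M -> T2 -> 0, F finitely presented, s T1 = s T2 = 0 *)
Definition u_S_fin_pres_wrt (M : lmodType R) (s : R) : Prop :=
  exists (F T1 T2 : lmodType R) (i : {linear T1 -> F}) (g : {linear F -> M})
         (p : {linear M -> T2}),
    fin_pres F /\
    injective i /\
    (forall x : F, g x = 0 <-> exists t, x = i t) /\
    (forall m : M, p m = 0 <-> exists x, m = g x) /\
    surj p /\
    (forall t : T1, s *: t = 0) /\ (forall t : T2, s *: t = 0).

Definition S_fin_pres (S : R -> Prop) (M : lmodType R) : Prop :=
  exists (n : nat) (f : {linear 'rV[R]_n -> M}),
    surj f /\ exists s, S s /\ S_finite_sub_wrt (fun x => f x = 0) s.

(* c-S-finitely presented: a finitely presented submodule N of M (given as an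
   injective linear map N -> M) with s M contained in N *)
Definition c_S_fin_pres (S : R -> Prop) (M : lmodType R) : Prop :=
  exists s, S s /\ exists (N : lmodType R) (j : {linear N -> M}),
    injective j /\ fin_pres N /\ forall m : M, exists y, s *: m = j y.

(* M is (isomorphic to) a finitely generated ideal of R: M embeds into R
   linearly, with image a finitely generated ideal *)
Definition fg_ideal (M : lmodType R) : Prop :=
  exists j : {linear M -> R^o}, injective j /\ fg_sub (fun r => exists x, j x = r).

Definition u_S_coherent (S : R -> Prop) : Prop :=
  exists s, S s /\ S_finite_wrt R^o s /\
    forall M : lmodType R, fg_ideal M -> u_S_fin_pres_wrt M s.

Definition S_coherent (S : R -> Prop) : Prop :=
  forall M : lmodType R, fg_ideal M -> S_fin_pres S M.

Definition c_S_coherent (S : R -> Prop) : Prop :=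
  forall M : lmodType R, fg_ideal M -> c_S_fin_pres S M.

End Defs.

(* Main.v *)
From HB Require Import structures.
From mathcomp Require Import all_boot all_order all_algebra.
Require Import Defs.
From Stdlib Require Import Classical ClassicalEpsilon.
Set Implicit Arguments. Unset Strict Implicit. Unset Printing Implicit Defensive.
Import GRing.Theory.
Local Open Scope ring_scope.

Section Fix.
Variables (R : comPzRingType) (M : lmodType R) (e : R).
Definition fixp : {pred M} := fun m => e *: m == m.
Lemma fixp_closed : subsemimod_closed fixp.
Proof.
split; first split.
- by rewrite /fixp unfold_in /= scaler0.
- move=> x y; rewrite !unfold_in /= => /eqP hx /eqP hy; by rewrite scalerDr hx hy.
- move=> a x; rewrite !unfold_in /= => /eqP hx; by rewrite scalerA mulrC -scalerA hx.
Qed.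
HB.instance Definition _ := GRing.isSubmodClosed.Build R M fixp fixp_closed.
Inductive fixT := FixT x of x \in fixp.
Definition fval u := let: FixT x _ := u in x.
HB.instance Definition _ := [isSub for fval].
HB.instance Definition _ := [Choice of fixT by <:].
HB.instance Definition _ := [SubChoice_isSubLmodule of fixT by <:].

Lemma fvalE (x : fixT) : e *: val x = val x.
Proof. by case: x => y /=; rewrite unfold_in => /eqP. Qed.


Hypothesis he : e * e = e.
Lemma proj_in (m : M) : e *: m \in fixp.
Proof. by rewrite unfold_in /= scalerA he. Qed.
Definition projF (m : M) : fixT := FixT (proj_in m).
Lemma projF_lin : linear projF.
Proof. move=> a x y; apply: val_inj => /=.
rewrite linearD linearZ /=.
by []. Qed.
HB.instance Definition _ := GRing.isLinear.Build R M fixT *:%R projF projF_lin.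
End Fix.

Section Lsum.
Variables (R : comPzRingType) (M : lmodType R) (n : nat) (v : 'I_n -> M).
Definition lsum (c : 'rV[R]_n) : M := \sum_i c 0 i *: v i.
Lemma lsum_lin : linear lsum.
Proof. move=> a x y; rewrite /lsum scaler_sumr -big_split /=.
by apply: eq_bigr => i _; rewrite !mxE scalerDl scalerA. Qed.
HB.instance Definition _ := GRing.isLinear.Build R 'rV[R]_n M *:%R lsum lsum_lin.
Lemma lsum_delta i : lsum (delta_mx 0 i) = v i.
Proof. rewrite /lsum (bigD1 i) //= big1 ?addr0; first by rewrite mxE !eqxx scale1r.
by move=> j /negPf hj; rewrite mxE hj andbF scale0r. Qed.
End Lsum.

Section Zlin.
Variables (R : comPzRingType) (U V : lmodType R).
Definition zmap (x : U) : V := 0.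
Lemma zmap_lin : linear zmap.
Proof. by move=> a x y; rewrite /zmap scaler0 addr0. Qed.
HB.instance Definition _ := GRing.isLinear.Build R U V *:%R zmap zmap_lin.
End Zlin.

Section Span.
Variables (R : comPzRingType) (M : lmodType R).
Implicit Types (g : seq M) (x y : M).

Lemma span0 g : in_span g 0.
Proof. exists (fun _ => 0); by rewrite big1 // => i _; rewrite scale0r. Qed.

Lemma spanD g x y : in_span g x -> in_span g y -> in_span g (x + y).
Proof. move=> [c1 ->] [c2 ->]; exists (fun i => c1 i + c2 i).
by rewrite -big_split; apply: eq_bigr => i _; rewrite scalerDl. Qed.

Lemma spanZ g a x : in_span g x -> in_span g (a *: x).
Proof. move=> [c ->]; exists (fun i => a * c i).
by rewrite scaler_sumr; apply: eq_bigr => i _; rewrite scalerA. Qed.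

Lemma spanN g x : in_span g x -> in_span g (- x).
Proof. by move=> h; rewrite -scaleN1r; apply: spanZ. Qed.

Lemma spanB g x y : in_span g x -> in_span g y -> in_span g (x - y).
Proof. by move=> hx hy; apply: spanD => //; apply: spanN. Qed.

Lemma span_nth g (i : nat) : (i < size g)%N -> in_span g g`_i.
Proof. move=> hi; exists (fun j : 'I_(size g) => (j == Ordinal hi)%:R).
rewrite (bigD1 (Ordinal hi)) //= eqxx scale1r big1 ?addr0 //.
by move=> j /negPf ->; rewrite scale0r. Qed.

Lemma span_mem g y : y \in g -> in_span g y.
Proof. by move=> hy; rewrite -(nth_index 0 hy); apply: span_nth; rewrite index_mem. Qed.

Lemma span_sum g (I : finType) (F : I -> M) :
  (forall i, in_span g (F i)) -> in_span g (\sum_i F i).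
Proof. move=> h; apply: (big_ind (in_span g)) => //; [exact: span0 | exact: spanD]. Qed.

Lemma span_comb g n (c : 'I_n -> R) (y : 'I_n -> M) :
  (forall i, in_span g (y i)) -> in_span g (\sum_i c i *: y i).
Proof. by move=> h; apply: span_sum => i; apply: spanZ. Qed.

Lemma span_sub g1 g2 x : (forall y, y \in g1 -> in_span g2 y) -> in_span g1 x -> in_span g2 x.
Proof. move=> h [c ->]; apply: span_comb => i; apply: h; exact: mem_nth. Qed.

Lemma span_submod g : is_submod (in_span g).
Proof. split; first exact: span0. by move=> a u v hu hv; apply: spanD => //; apply: spanZ. Qed.

End Span.
Section Span2.
Variables (R : comPzRingType) (M : lmodType R).
Implicit Types (g : seq M) (x y : M).
Lemma span_map (N : lmodType R) (f : {linear M -> N}) g x :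
  in_span g x -> in_span (map f g) (f x).
Proof. move=> [c ->]; rewrite linear_sum.
under eq_bigr do rewrite linearZ /=.
apply: span_comb => i; apply: span_mem; apply: map_f; exact: mem_nth. Qed.

Lemma span_ker (N : lmodType R) (f : {linear M -> N}) g x :
  (forall y, y \in g -> f y = 0) -> in_span g x -> f x = 0.
Proof. move=> h [c ->]; rewrite linear_sum big1 // => i _.
by rewrite linearZ /= h ?scaler0 // mem_nth. Qed.

Lemma span_scale g a x : in_span g x -> in_span (map ( *:%R a) g) (a *: x).
Proof. move=> [c ->]; rewrite scaler_sumr.
under eq_bigr do rewrite scalerA mulrC -scalerA.
apply: span_comb => i; apply: span_mem; apply: (map_f ( *:%R a)); exact: mem_nth. Qed.
End Span2.
Lemma choice_I (n : nat) (T : Type) (P : 'I_n -> T -> Prop) :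
  (forall i, exists x, P i x) -> exists f : 'I_n -> T, forall i, P i (f i).
Proof.
move=> H; exists (fun i => proj1_sig (constructive_indefinite_description _ (H i))).
by move=> i; case: (constructive_indefinite_description _ (H i)).
Qed.

Section Main.
Variable R : comPzRingType.

Lemma projF0 (M : lmodType R) (e : R) (he : e * e = e) (m : M) :
  projF he m = 0 <-> e *: m = 0.
Proof.
split=> H.
- by have := congr1 val H.
- by apply: val_inj.
Qed.

Lemma lin_delta (V : lmodType R) n (phi : {linear 'rV[R]_n -> V}) c :
  phi c = \sum_i c 0 i *: phi (delta_mx 0 i).
Proof. rewrite {1}(row_sum_delta c) linear_sum; apply: eq_bigr => i _; by rewrite linearZ. Qed.

Lemma S_idem_aux (S : R -> Prop) (HS : Defs.multiplicative S) (l : seq R) :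
  exists s, S s /\ forall t, S t -> t \in l -> exists u, S u /\ s = u * t.
Proof.
case: HS => S1 SM.
elim: l => [|x l [s [Ss IH]]]; first by exists 1; split.
case: (classic (S x)) => Sx.
- exists (s * x); split; first exact: SM.
  move=> t St; rewrite in_cons => /orP [/eqP ->|tl].
  + by exists s.
  + have [u [Su ->]] := IH t St tl; exists (u * x); split; first exact: SM.
    by rewrite -!mulrA [t * x]mulrC.
- exists s; split => // t St; rewrite in_cons => /orP [/eqP tx|tl].
  + by subst t.
  + exact: IH.
Qed.

Lemma S_idem (S : R -> Prop) (HS : Defs.multiplicative S) (Hfin : finite_subset S) :
  exists e, S e /\ e * e = e /\ forall t, S t -> exists u, e = u * t.
Proof.
have [l Hl] := Hfin.
have [s [Ss Hs]] := S_idem_aux HS l.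
have [S1 SM] := HS.
have Sss : S (s * s) by apply: SM.
have [u [Su Eu]] := Hs _ Sss (Hl _ Sss).
exists (s * u); split; first exact: SM.
split.
- by rewrite mulrACA mulrA [s * s * u]mulrC -Eu.
- move=> t St; have [v [Sv Ev]] := Hs _ St (Hl _ St).
  by exists (v * u); rewrite Ev -mulrA [t * u]mulrC mulrA.
Qed.

Lemma L0 (M : lmodType R) : fg_ideal M ->
  exists n (f : {linear 'rV[R]_n -> M}), surj f.
Proof.
move=> [j [jinj [g hg]]].
have : forall i : 'I_(size g), exists x, j x = g`_i.
  by move=> i; apply/hg; apply: span_nth.
move=> /choice_I [m hm].
exists (size g), (lsum m) => y.
have [c hc] : in_span g (j y) by apply/hg; exists y.
exists (\row_i c i); apply: jinj.
rewrite hc /lsum linear_sum; apply: eq_bigr => i _.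
by rewrite linearZZ hm mxE.
Qed.

Lemma L1 (e : R) (he : e * e = e) (X : lmodType R) n (f : {linear 'rV[R]_n -> X})
  (fs : surj f) (G0 : seq 'rV[R]_n)
  (h1 : forall y, in_span G0 y -> f y = 0)
  (h2 : forall y, f y = 0 -> in_span G0 (e *: y)) : fin_pres (fixT X e).
Proof.
exists n, (projF he \o f); split.
  move=> y; have [c hc] := fs (val y); exists c; apply: val_inj => /=.
  by rewrite hc fvalE.
pose G := [seq (1 - e) *: delta_mx 0 i | i <- enum 'I_n] ++ map ( *:%R e) G0.
exists G => x; rewrite /= projF0; split => H.
- have -> : x = e *: x + (1 - e) *: x by rewrite scalerBl scale1r addrC subrK.
  apply: spanD.
  + have : in_span G0 (e *: (e *: x)) by apply: h2; rewrite linearZ /= H.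
    rewrite scalerA he => /(span_scale e); rewrite scalerA he; apply: span_sub => y hy.
    by apply: span_mem; rewrite mem_cat hy orbT.
  + rewrite {1}(row_sum_delta x) scaler_sumr.
    under eq_bigr do rewrite scalerA mulrC -scalerA.
    apply: span_comb => i; apply: span_mem; rewrite mem_cat; apply/orP; left.
    by apply: (map_f (fun i => (1 - e) *: delta_mx 0 i)); rewrite mem_enum.
- apply/(projF0 he); apply: (span_ker (f := projF he \o f)) H => y.
  rewrite mem_cat => /orP [/mapP [i _ ->]| /mapP [z hz ->]] /=; apply/projF0.
  + by rewrite linearZ /= scalerA mulrBr mulr1 he subrr scale0r.
  + by rewrite linearZ /= (h1 _ (span_mem hz)) !scaler0.
Qed.
End Main.
Section L2.
Variable R : comPzRingType.
Lemma L2 (e : R) (he : e * e = e) (F M : lmodType R) k (h : {linear 'rV[R]_k -> F})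
  (hs : surj h) (G : seq 'rV[R]_k) (hG : forall y, h y = 0 <-> in_span G y)
  (g : {linear F -> M}) (Hinj : forall x, g (e *: x) = 0 -> e *: x = 0)
  (Hcov : forall m, exists x, g x = e *: m)
  n (f : {linear 'rV[R]_n -> M}) (fs : surj f) :
  S_finite_sub_wrt (fun c => f c = 0) e.
Proof.
have [x_ hx] := @choice_I _ _ (fun i x => g x = e *: f (delta_mx 0 i)) (fun i => Hcov _).
have [a ha] := @choice_I _ _ (fun i y => h y = e *: x_ i) (fun i => hs _).
have [b hb] := @choice_I _ _ (fun l y => f y = g (e *: h (delta_mx 0 l))) (fun l => fs _).
pose al := lsum a; pose be := lsum b.
have K0 c : h (al c) = \sum_i c 0 i *: (e *: x_ i).
  rewrite /al /lsum linear_sum; apply: eq_bigr => i _; by rewrite linearZ /= ha.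
have K2 c : e *: h (al c) = h (al c).
  rewrite K0 scaler_sumr; apply: eq_bigr => i _; by rewrite !scalerA [e * _]mulrC -mulrA he.
have K1 c : g (h (al c)) = e *: f c.
  rewrite K0 linear_sum [in RHS](lin_delta f c) scaler_sumr; apply: eq_bigr => i _.
  by rewrite !linearZ /= hx !scalerA -mulrA he.
have K3 d : f (be d) = g (e *: h d).
  rewrite /be /lsum linear_sum [in RHS](lin_delta h d) scaler_sumr linear_sum.
  apply: eq_bigr => l _; rewrite linearZ /= hb scalerA mulrC -scalerA; exact: (esym (linearZZ g _ _)).
pose G1 := [seq e *: (delta_mx 0 i - be (al (delta_mx 0 i))) | i <- enum 'I_n].
pose G2 := map be G.
exists (in_span (G1 ++ G2)); split; first exact: span_submod.
split; first by exists (G1 ++ G2).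
split.
- move=> c; apply: span_ker => y; rewrite mem_cat => /orP [/mapP [i _ ->]| /mapP [z hz ->]].
  + rewrite linearZ linearB /= K3 K2 K1 scalerBr scalerA he subrr //.
  + by rewrite K3 (proj2 (hG z) (span_mem hz)) scaler0 linear0.
- move=> c hc.
  have hy : h (al c) = 0.
    have H1 : g (e *: h (al c)) = 0 by rewrite K2 K1 hc scaler0.
    by rewrite -K2; apply: Hinj.
  have -> : e *: c = e *: (c - be (al c)) + e *: be (al c) by rewrite -scalerDr subrK.
  apply: spanD.
  + have -> : e *: (c - be (al c)) =
       \sum_i c 0 i *: (e *: (delta_mx 0 i - be (al (delta_mx 0 i)))).
      rewrite [be (al c)](lin_delta (be \o al)) {1}(row_sum_delta c) -sumrB scaler_sumr.
      by apply: eq_bigr => i _; rewrite -scalerBr scalerA mulrC -scalerA.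
    apply: span_comb => i; apply: span_mem; rewrite mem_cat; apply/orP; left.
    by apply: (map_f (fun i => e *: (delta_mx 0 i - be (al (delta_mx 0 i))))); rewrite mem_enum.
  + apply: spanZ; have := span_map be (proj1 (hG _) hy); apply: span_sub => y hy'.
    by apply: span_mem; rewrite mem_cat hy' orbT.
Qed.
End L2.
Section Thm.
Variable R : comPzRingType.
Variables (S : R -> Prop) (e : R) (Se : S e) (he : e * e = e)
  (hdiv : forall t, S t -> exists u, e = u * t).

Lemma u_to_c : u_S_coherent S -> c_S_coherent S.
Proof.
move=> [s [Ss [_ H1]]] M hM.
have [F [T1 [T2 [i [g [p [Ffp [iinj [hg [hp [ps [hT1 hT2]]]]]]]]]]]] := H1 M hM.
have [w hw] := hdiv Ss.
have [k [h [hs [G hG]]]] := Ffp.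
exists e; split => //.
exists (fixT F e), (g \o val); split; last split.
- move=> x y /= Hxy.
  have : g (val x - val y) = 0 by rewrite linearB /= Hxy subrr.
  move=> /hg [t ht]; apply: val_inj; apply/eqP; rewrite -subr_eq0; apply/eqP.
  rewrite -(fvalE x) -(fvalE y) -scalerBr ht -linearZ /= hw -scalerA hT1 scaler0.
  exact: linear0.
- apply: (L1 he hs) => y.
  + by move/hG.
  + by move=> hy; apply/hG; rewrite linearZ /= hy scaler0.
- move=> m.
  have : p (e *: m) = 0 by rewrite linearZ /= hw -scalerA hT2 scaler0.
  move=> /hp [x hx]; exists (projF he x) => /=.
  by rewrite linearZ /= -hx scalerA he.
Qed.

Lemma c_to_S : c_S_coherent S -> S_coherent S.
Proof.
move=> H3 M hM.
have [s [Ss [N [j [jinj [Nfp hN]]]]]] := H3 M hM.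
have [k [h [hs [G hG]]]] := Nfp.
have [n [f fs]] := L0 hM.
have [w hw] := hdiv Ss.
exists n, f; split => //; exists e; split => //.
apply: (L2 he hs hG (g := j)) => //.
- move=> x hx; apply: jinj; by rewrite hx linear0.
- move=> m; have [y hy] := hN m; exists (w *: y).
  by rewrite linearZ /= -hy scalerA -hw.
Qed.

Lemma S_to_u : S_coherent S -> u_S_coherent S.
Proof.
move=> H2; exists e; split => //; split.
  exists (fun _ => True); split; first by split.
  split; last by split.
  exists [:: (1 : R^o)] => x; split => // _.
  exists (fun _ => x); rewrite big_ord1 /=.
  by rewrite [RHS]/GRing.scale /= mulr1.
move=> M hM.
have [n [f [fs [t [St [F0 [F0sub [[G hG] [F0K KF0]]]]]]]]] := H2 M hM.
have [w hw] := hdiv St.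
have Ffp : fin_pres (fixT M e).
  apply: (L1 he fs (G0 := G)) => y.
  - by move=> /hG /F0K.
  - move=> /KF0 /hG /(spanZ w); by rewrite scalerA -hw.
have he' : (1 - e) * (1 - e) = 1 - e.
  by rewrite mulrBr mulr1 mulrBl mul1r he subrr subr0.
exists (fixT M e), 'rV[R]_0, (fixT M (1 - e)), (@zmap R _ _), val, (projF he').
split => //; split; last split; last split; last split; last split.
- by move=> x y _; rewrite (thinmx0 x) (thinmx0 y).
- move=> x; split.
  + move=> hx; exists 0; apply: val_inj; rewrite hx; exact: (esym (raddf0 val)).
  + move=> [t0 ->]; exact: (raddf0 val).
- move=> m; rewrite projF0; split.
  + move=> hm; exists (projF he m) => /=.
    by move: hm; rewrite scalerBl scale1r => /eqP; rewrite subr_eq0 => /eqP.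
  + move=> [x ->]; by rewrite scalerBl scale1r fvalE subrr.
- move=> y; exists (val y); apply: val_inj => /=; exact: fvalE.
- by move=> t0; rewrite (thinmx0 t0) scaler0.
- move=> t0; apply: val_inj => /=.
  by rewrite -(fvalE t0) scalerA mulrBr mulr1 he subrr scale0r.
Qed.
End Thm.

Theorem proposition3p13 (R : comPzRingType) (S : R -> Prop)
  (HS : Defs.multiplicative S) (Hfin : finite_subset S) :
  (u_S_coherent S <-> S_coherent S) /\ (S_coherent S <-> c_S_coherent S).
Proof.
have [e [Se [he hdiv]]] := S_idem HS Hfin.
have uc := u_to_c Se he hdiv.
have cS := c_to_S Se he hdiv.
have Su := S_to_u Se he hdiv.
split; split; auto.
Qed.
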